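(* Let $\Omega\subset\mathbb{R}^2$ be an open, bounded domain and let $\tau_h=\{\Omega^{(k)}\}_k$ be a quadtree partition of $\Omega$. Let $u\in\mathbb{P}_{2,2}(\Omega)$ be a bi-quadratic polynomial, i.e. $u(x,y)=\sum_{0\le i\le 2,\,0\le j\le 2}a_{ij}x^iy^j$. Let $\Pi_h^1u\in\tilde Q_h^1$ be the bi-linear interpolant of $u$, and let $\boldsymbol{\sigma}_h^*$ be obtained by applying the gradient recovery procedure described below to $u_h=\Pi_h^1u$. Then $\boldsymbol{\sigma}_h^*(x_i,y_j)=\nabla u(x_i,y_j)$ at every vertex $(x_i,y_j)$ of the partition.
   Context: A quadtree partition of a rectangular (Cartesian) domain is obtained from a Cartesian-product mesh (tensor product of 1D partitions of the $x$- and $y$-sides) by repeatedly replacing a rectangular cell by its four children (obtained by halving its edges) or four children by their parent, with neighbouring cells differing by at most one refinement level (2:1 balance); nodes lying in the interior of an edge of a neighbouring coarser cell are called hanging nodes. $\tilde Q_h^1$ denotes the space of continuous functions that are bi-linear (in $\mathbb{P}_{1,1}$) on each cell, where the value at each hanging node is constrained to be the arithmetic mean of the values at the two endpoints of the coarse edge containing it; its degrees of freedom are the values at the non-hanging vertices, and $\Pi_h^1u$ is the element of $\tilde Q_h^1$ coinciding with $u$ at these vertices. Discrete gradient on edges: for a mesh edge $s_{x,i}=[x_{i-1},x_i]\times\{y_j\}$ oriented along $x$ with length $h_{x,i}=x_i-x_{i-1}$, set $\boldsymbol{\sigma}_h(s_{x,i})=\big((u_h(x_i,y_j)-u_h(x_{i-1},y_j))/h_{x,i},\,0\big)^T$;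 for a mesh edge $s_{y,j}=\{x_i\}\times[y_{j-1},y_j]$ with length $h_{y,j}=y_j-y_{j-1}$, set $\boldsymbol{\sigma}_h(s_{y,j})=\big(0,\,(u_h(x_i,y_j)-u_h(x_i,y_{j-1}))/h_{y,j}\big)^T$. Gradient recovery: at an internal vertex $(x_i,y_j)$, with $s_{x,i},s_{x,i+1}$ the mesh edges along $x$ to the left and right of the vertex and $s_{y,j},s_{y,j+1}$ the mesh edges along $y$ below and above it, $$\boldsymbol{\sigma}_h^*(x_i,y_j)=\frac{1}{\frac{1}{h_{x,i}}+\frac{1}{h_{x,i+1}}}\Big(\frac{\boldsymbol{\sigma}_h(s_{x,i})}{h_{x,i}}+\frac{\boldsymbol{\sigma}_h(s_{x,i+1})}{h_{x,i+1}}\Big)+\frac{1}{\frac{1}{h_{y,j}}+\frac{1}{h_{y,j+1}}}\Big(\frac{\boldsymbol{\sigma}_h(s_{y,j})}{h_{y,j}}+\frac{\boldsymbol{\sigma}_h(s_{y,j+1})}{h_{y,j+1}}\Big).$$ At a boundary vertex, in each direction in which edges exist on one side only, the corresponding term is replaced by a one-sided formula; e.g. for a vertex on the bottom boundary, with $s_{y,j+1},s_{y,j+2}$ the two consecutive mesh edges above the vertex, the $y$-term is replaced by $$\frac{1}{\frac{1}{h_{y,j+1}}+\frac{1}{h_{y,j+2}}}\Big[\boldsymbol{\sigma}_h(s_{y,j+1})\Big(\frac{1}{h_{y,j+1}}+\frac{2}{h_{y,j+2}}\Big)-\frac{\boldsymbol{\sigma}_h(s_{y,j+2})}{h_{y,j+2}}\Big],$$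 and analogously for the other boundary sides. The recovered gradient $\boldsymbol{\sigma}_h^*\in[\tilde Q_h^1]^2$ is defined by these vertex values. *)

(* Defs.v *)
From HB Require Import structures.
From mathcomp Require Import all_boot all_order all_algebra.
Set Implicit Arguments. Unset Strict Implicit. Unset Printing Implicit Defensive.
Import Order.TTheory GRing.Theory Num.Theory.
Local Open Scope ring_scope.

(* A quadtree over one cell of the initial Cartesian-product mesh:
   a leaf, or a cell split into its four children (SW, SE, NW, NE). *)
Inductive qtree : Type :=
  | QLeaf : qtree
  | QNode : qtree -> qtree -> qtree -> qtree -> qtree.

Section Quadtree.
Variable R : realFieldType.

Definition rect := ((R * R) * (R * R))%type.
Definition cx0 (K : rect) := K.1.1.
Definition cx1 (K : rect) := K.1.2.
Definition cy0 (K : rect) := K.2.1.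
Definition cy1 (K : rect) := K.2.2.

Fixpoint leaves (t : qtree) (K : rect) (l : nat) : seq (rect * nat) :=
  match t with
  | QLeaf => [:: (K, l)]
  | QNode t1 t2 t3 t4 =>
      let xm := (cx0 K + cx1 K) / 2 in
      let ym := (cy0 K + cy1 K) / 2 in
      leaves t1 ((cx0 K, xm), (cy0 K, ym)) l.+1 ++
      leaves t2 ((xm, cx1 K), (cy0 K, ym)) l.+1 ++
      leaves t3 ((cx0 K, xm), (ym, cy1 K)) l.+1 ++
      leaves t4 ((xm, cx1 K), (ym, cy1 K)) l.+1
  end.

(* Cartesian-product mesh given by the 1D partitions mX, mY of the sides,
   and a quadtree refinement mT i j of each tensor cell
   [mX_i, mX_{i+1}] x [mY_j, mY_{j+1}] *)
Record qmesh := QMesh { mX : seq R; mY : seq R; mT : nat -> nat -> qtree }.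

Definition cells (M : qmesh) : seq (rect * nat) :=
  flatten [seq flatten [seq leaves (mT M i j)
                              (((mX M)`_i, (mX M)`_i.+1), ((mY M)`_j, (mY M)`_j.+1)) 0
                       | j <- iota 0 (size (mY M)).-1]
          | i <- iota 0 (size (mX M)).-1].

Definition is_cell (M : qmesh) (K : rect) (l : nat) : Prop := (K, l) \in cells M.

Definition well_formed (M : qmesh) : Prop :=
  (2 <= size (mX M))%N /\ sorted (fun a b : R => a < b) (mX M) /\
  (2 <= size (mY M))%N /\ sorted (fun a b : R => a < b) (mY M).

Definition adjacent (K K' : rect) : Prop :=
  ((cx1 K = cx0 K' \/ cx1 K' = cx0 K) /\
     Num.max (cy0 K) (cy0 K') < Num.min (cy1 K) (cy1 K')) \/
  ((cy1 K = cy0 K' \/ cy1 K' = cy0 K) /\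
     Num.max (cx0 K) (cx0 K') < Num.min (cx1 K) (cx1 K')).

Definition balanced (M : qmesh) : Prop :=
  forall K l K' l', is_cell M K l -> is_cell M K' l' -> adjacent K K' ->
    (l <= l'.+1)%N.

Definition quadtree_partition (M : qmesh) : Prop := well_formed M /\ balanced M.

Definition is_corner (K : rect) (v : R * R) : Prop :=
  v = (cx0 K, cy0 K) \/ v = (cx1 K, cy0 K) \/ v = (cx0 K, cy1 K) \/ v = (cx1 K, cy1 K).

Definition is_vertex (M : qmesh) (v : R * R) : Prop :=
  exists K l, is_cell M K l /\ is_corner K v.

Definition edge_int (K : rect) (a b v : R * R) : Prop :=
  (a = (cx0 K, cy0 K) /\ b = (cx1 K, cy0 K) /\ v.2 = cy0 K /\ cx0 K < v.1 < cx1 K) \/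
  (a = (cx0 K, cy1 K) /\ b = (cx1 K, cy1 K) /\ v.2 = cy1 K /\ cx0 K < v.1 < cx1 K) \/
  (a = (cx0 K, cy0 K) /\ b = (cx0 K, cy1 K) /\ v.1 = cx0 K /\ cy0 K < v.2 < cy1 K) \/
  (a = (cx1 K, cy0 K) /\ b = (cx1 K, cy1 K) /\ v.1 = cx1 K /\ cy0 K < v.2 < cy1 K).

Definition hanging (M : qmesh) (v : R * R) : Prop :=
  is_vertex M v /\ exists K l a b, is_cell M K l /\ edge_int K a b v.

Definition in_Qtilde (M : qmesh) (w : R * R -> R) : Prop :=
  (forall K l, is_cell M K l -> exists c0 c1 c2 c3 : R,
      forall x y, cx0 K <= x <= cx1 K -> cy0 K <= y <= cy1 K ->
        w (x, y) = c0 + c1 * x + c2 * y + c3 * x * y) /\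
  (forall v K l a b, hanging M v -> is_cell M K l -> edge_int K a b v ->
      w v = (w a + w b) / 2).

Definition interpolant (M : qmesh) (u w : R * R -> R) : Prop :=
  in_Qtilde M w /\ (forall v, is_vertex M v -> ~ hanging M v -> w v = u v).

Definition hedge (M : qmesh) (a b : R * R) : Prop :=
  (exists K l, is_cell M K l /\
     ((a = (cx0 K, cy0 K) /\ b = (cx1 K, cy0 K)) \/
      (a = (cx0 K, cy1 K) /\ b = (cx1 K, cy1 K)))) /\
  ~ hanging M a /\ ~ hanging M b.

Definition vedge (M : qmesh) (a b : R * R) : Prop :=
  (exists K l, is_cell M K l /\
     ((a = (cx0 K, cy0 K) /\ b = (cx0 K, cy1 K)) \/
      (a = (cx1 K, cy0 K) /\ b = (cx1 K, cy1 K)))) /\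
  ~ hanging M a /\ ~ hanging M b.

(* nonzero component of the discrete gradient sigma_h on the edge [a,b] *)
Definition sig_x (w : R * R -> R) (a b : R * R) : R := (w b - w a) / (b.1 - a.1).
Definition sig_y (w : R * R -> R) (a b : R * R) : R := (w b - w a) / (b.2 - a.2).

(* first component of the x-term of the recovery at v (its second component is 0) *)
Definition xterm (M : qmesh) (w : R * R -> R) (v : R * R) (t : R) : Prop :=
  (exists a b, hedge M a v /\ hedge M v b /\
     let h1 := v.1 - a.1 in let h2 := b.1 - v.1 in
     t = (1 / (1 / h1 + 1 / h2)) * (sig_x w a v / h1 + sig_x w v b / h2)) \/
  ((~ exists a, hedge M a v) /\ exists b c, hedge M v b /\ hedge M b c /\
     let h1 := b.1 - v.1 in let h2 := c.1 - b.1 in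
     t = (1 / (1 / h1 + 1 / h2)) *
           (sig_x w v b * (1 / h1 + 2 / h2) - sig_x w b c / h2)) \/
  ((~ exists b, hedge M v b) /\ exists a0 a, hedge M a0 a /\ hedge M a v /\
     let h1 := v.1 - a.1 in let h2 := a.1 - a0.1 in
     t = (1 / (1 / h1 + 1 / h2)) *
           (sig_x w a v * (1 / h1 + 2 / h2) - sig_x w a0 a / h2)).

(* second component of the y-term of the recovery at v (its first component is 0) *)
Definition yterm (M : qmesh) (w : R * R -> R) (v : R * R) (t : R) : Prop :=
  (exists a b, vedge M a v /\ vedge M v b /\
     let h1 := v.2 - a.2 in let h2 := b.2 - v.2 in
     t = (1 / (1 / h1 + 1 / h2)) * (sig_y w a v / h1 + sig_y w v b / h2)) \/
  ((~ exists a, vedge M a v) /\ exists b c, vedge M v b /\ vedge M b c /\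
     let h1 := b.2 - v.2 in let h2 := c.2 - b.2 in
     t = (1 / (1 / h1 + 1 / h2)) *
           (sig_y w v b * (1 / h1 + 2 / h2) - sig_y w b c / h2)) \/
  ((~ exists b, vedge M v b) /\ exists a0 a, vedge M a0 a /\ vedge M a v /\
     let h1 := v.2 - a.2 in let h2 := a.2 - a0.2 in
     t = (1 / (1 / h1 + 1 / h2)) *
           (sig_y w a v * (1 / h1 + 2 / h2) - sig_y w a0 a / h2)).

Definition recovered (M : qmesh) (w : R * R -> R) (v : R * R) (g : R * R) : Prop :=
  exists gx gy, xterm M w v gx /\ yterm M w v gy /\ g = (gx, gy).

Definition biquad (a : 'I_3 -> 'I_3 -> R) (v : R * R) : R :=
  \sum_(i < 3) \sum_(j < 3) a i j * v.1 ^+ i * v.2 ^+ j.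

Definition grad_biquad (a : 'I_3 -> 'I_3 -> R) (v : R * R) : R * R :=
  (\sum_(i < 3) \sum_(j < 3) a i j * (i%:R * v.1 ^+ i.-1) * v.2 ^+ j,
   \sum_(i < 3) \sum_(j < 3) a i j * v.1 ^+ i * (j%:R * v.2 ^+ j.-1)).

End Quadtree.

(* Main.v *)
Require Import Defs.
From HB Require Import structures.
From mathcomp Require Import all_boot all_order all_algebra.
From mathcomp Require Import ring lra zify.
Import Order.TTheory GRing.Theory Num.Theory.
Local Open Scope ring_scope.

Section Aux.
Variable R : realFieldType.

Lemma leaves_pos (t : qtree) (K : rect R) l K' l' :
  cx0 K < cx1 K -> cy0 K < cy1 K -> (K', l') \in leaves t K l ->
  cx0 K' < cx1 K' /\ cy0 K' < cy1 K'.
Proof.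
elim: t K l => [|t1 IH1 t2 IH2 t3 IH3 t4 IH4] K l hx hy /=.
  by rewrite mem_seq1 => /eqP [-> _].
have [hx1 hx2] := midf_lt hx.
have [hy1 hy2] := midf_lt hy.
rewrite !mem_cat => /orP [|/orP [|/orP []]].
- by apply: IH1.
- by apply: IH2.
- by apply: IH3.
- by apply: IH4.
Qed.

Lemma cell_pos (M : qmesh R) K l : well_formed M -> is_cell M K l ->
  cx0 K < cx1 K /\ cy0 K < cy1 K.
Proof.
move=> [sX [oX [sY oY]]]; rewrite /is_cell /cells.
case/flatten_mapP => i; rewrite mem_iota add0n => /andP [_ hi].
case/flatten_mapP => j; rewrite mem_iota add0n => /andP [_ hj].
apply: leaves_pos; rewrite /cx0 /cx1 /cy0 /cy1 /=.
  apply: (sorted_ltn_nth lt_trans) => //; rewrite ?inE /=; try lia.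
apply: (sorted_ltn_nth lt_trans) => //; rewrite ?inE /=; try lia.
Qed.


Lemma hedge_facts (M : qmesh R) p q : well_formed M -> hedge M p q ->
  [/\ p.2 = q.2, p.1 < q.1, is_vertex M p /\ ~ hanging M p &
      is_vertex M q /\ ~ hanging M q].
Proof.
move=> wf [[K [l [hK H]]] [np nq]]; have [hx hy] := @cell_pos M K l wf hK.
have vp : is_vertex M p by exists K, l; split => //; rewrite /is_corner; case: H => [[-> _]|[-> _]]; tauto.
have vq : is_vertex M q by exists K, l; split => //; rewrite /is_corner; case: H => [[_ ->]|[_ ->]]; tauto.
by case: H => [[ep eq]|[ep eq]]; split => //; rewrite ep eq.
Qed.

Lemma vedge_facts (M : qmesh R) p q : well_formed M -> vedge M p q ->
  [/\ p.1 = q.1, p.2 < q.2, is_vertex M p /\ ~ hanging M p &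
      is_vertex M q /\ ~ hanging M q].
Proof.
move=> wf [[K [l [hK H]]] [np nq]]; have [hx hy] := @cell_pos M K l wf hK.
have vp : is_vertex M p by exists K, l; split => //; rewrite /is_corner; case: H => [[-> _]|[-> _]]; tauto.
have vq : is_vertex M q by exists K, l; split => //; rewrite /is_corner; case: H => [[_ ->]|[_ ->]]; tauto.
by case: H => [[ep eq]|[ep eq]]; split => //; rewrite ep eq.
Qed.


Lemma xc (a : 'I_3 -> 'I_3 -> R) (p x q y : R) : p < x -> x < q ->
 (1 / (1/(x-p) + 1/(q-x))) * ((biquad a (x,y) - biquad a (p,y))/(x-p)/(x-p)
   + (biquad a (q,y) - biquad a (x,y))/(q-x)/(q-x)) = (grad_biquad a (x,y)).1.
Proof.
move=> h1 h2.
rewrite /biquad /grad_biquad /= !big_ord_recl !big_ord0 /= /bump /=.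
field; do ?[apply/andP; split]; first [rewrite gt_eqF //; lra | rewrite lt_eqF //; lra].
Qed.

Lemma xl (a : 'I_3 -> 'I_3 -> R) (x q r y : R) : x < q -> q < r ->
 (1 / (1/(q-x) + 1/(r-q))) * ((biquad a (q,y) - biquad a (x,y))/(q-x) * (1/(q-x) + 2/(r-q))
   - (biquad a (r,y) - biquad a (q,y))/(r-q)/(r-q)) = (grad_biquad a (x,y)).1.
Proof.
move=> h1 h2.
rewrite /biquad /grad_biquad /= !big_ord_recl !big_ord0 /= /bump /=.
field; do ?[apply/andP; split]; first [rewrite gt_eqF //; lra | rewrite lt_eqF //; lra].
Qed.

Lemma xr (a : 'I_3 -> 'I_3 -> R) (r p x y : R) : r < p -> p < x ->
 (1 / (1/(x-p) + 1/(p-r))) * ((biquad a (x,y) - biquad a (p,y))/(x-p) * (1/(x-p) + 2/(p-r))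
   - (biquad a (p,y) - biquad a (r,y))/(p-r)/(p-r)) = (grad_biquad a (x,y)).1.
Proof.
move=> h1 h2.
rewrite /biquad /grad_biquad /= !big_ord_recl !big_ord0 /= /bump /=.
field; do ?[apply/andP; split]; first [rewrite gt_eqF //; lra | rewrite lt_eqF //; lra].
Qed.

Lemma yc (a : 'I_3 -> 'I_3 -> R) (p x q y : R) : p < y -> y < q ->
 (1 / (1/(y-p) + 1/(q-y))) * ((biquad a (x,y) - biquad a (x,p))/(y-p)/(y-p)
   + (biquad a (x,q) - biquad a (x,y))/(q-y)/(q-y)) = (grad_biquad a (x,y)).2.
Proof.
move=> h1 h2.
rewrite /biquad /grad_biquad /= !big_ord_recl !big_ord0 /= /bump /=.
field; do ?[apply/andP; split]; first [rewrite gt_eqF //; lra | rewrite lt_eqF //; lra].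
Qed.

Lemma yl (a : 'I_3 -> 'I_3 -> R) (x q r y : R) : y < q -> q < r ->
 (1 / (1/(q-y) + 1/(r-q))) * ((biquad a (x,q) - biquad a (x,y))/(q-y) * (1/(q-y) + 2/(r-q))
   - (biquad a (x,r) - biquad a (x,q))/(r-q)/(r-q)) = (grad_biquad a (x,y)).2.
Proof.
move=> h1 h2.
rewrite /biquad /grad_biquad /= !big_ord_recl !big_ord0 /= /bump /=.
field; do ?[apply/andP; split]; first [rewrite gt_eqF //; lra | rewrite lt_eqF //; lra].
Qed.

Lemma yr (a : 'I_3 -> 'I_3 -> R) (r p x y : R) : r < p -> p < y ->
 (1 / (1/(y-p) + 1/(p-r))) * ((biquad a (x,y) - biquad a (x,p))/(y-p) * (1/(y-p) + 2/(p-r))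
   - (biquad a (x,p) - biquad a (x,r))/(p-r)/(p-r)) = (grad_biquad a (x,y)).2.
Proof.
move=> h1 h2.
rewrite /biquad /grad_biquad /= !big_ord_recl !big_ord0 /= /bump /=.
field; do ?[apply/andP; split]; first [rewrite gt_eqF //; lra | rewrite lt_eqF //; lra].
Qed.

End Aux.

Theorem proposition1 (R : realFieldType) (M : qmesh R) (a : 'I_3 -> 'I_3 -> R)
    (uh : R * R -> R) :
  quadtree_partition M ->
  interpolant M (biquad a) uh ->
  forall v : R * R, is_vertex M v -> ~ hanging M v ->
  forall g : R * R, recovered M uh v g -> g = grad_biquad a v.
Proof.
move=> [wf _] [_ Hu] [x y] vv nh g [gx [gy [Hx [Hy ->]]]].
have ex : gx = (grad_biquad a (x, y)).1.
  case: Hx => [[[p1 p2] [[q1 q2] [ha [hb H]]]]|[[_ [[q1 q2] [[r1 r2] [ha [hb H]]]]]|[_ [[r1 r2] [[p1 p2] [ha [hb H]]]]]]];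
  cbv zeta in H; rewrite H /sig_x /=.
  - have [/= e1 l1 [v1 n1] _] := @hedge_facts _ _ _ _ wf ha.
    have [/= e2 l2 _ [v2 n2]] := @hedge_facts _ _ _ _ wf hb.
    subst; rewrite !Hu //; exact: xc.
  - have [/= e1 l1 _ [v1 n1]] := @hedge_facts _ _ _ _ wf ha.
    have [/= e2 l2 _ [v2 n2]] := @hedge_facts _ _ _ _ wf hb.
    subst; rewrite !Hu //; exact: xl.
  - have [/= e1 l1 [v1 n1] [v2 n2]] := @hedge_facts _ _ _ _ wf ha.
    have [/= e2 l2 _ _] := @hedge_facts _ _ _ _ wf hb.
    subst; rewrite !Hu //; exact: xr.
have ey : gy = (grad_biquad a (x, y)).2.
  case: Hy => [[[p1 p2] [[q1 q2] [ha [hb H]]]]|[[_ [[q1 q2] [[r1 r2] [ha [hb H]]]]]|[_ [[r1 r2] [[p1 p2] [ha [hb H]]]]]]];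
  cbv zeta in H; rewrite H /sig_y /=.
  - have [/= e1 l1 [v1 n1] _] := @vedge_facts _ _ _ _ wf ha.
    have [/= e2 l2 _ [v2 n2]] := @vedge_facts _ _ _ _ wf hb.
    subst; rewrite !Hu //; exact: yc.
  - have [/= e1 l1 _ [v1 n1]] := @vedge_facts _ _ _ _ wf ha.
    have [/= e2 l2 _ [v2 n2]] := @vedge_facts _ _ _ _ wf hb.
    subst; rewrite !Hu //; exact: yl.
  - have [/= e1 l1 [v1 n1] [v2 n2]] := @vedge_facts _ _ _ _ wf ha.
    have [/= e2 l2 _ _] := @vedge_facts _ _ _ _ wf hb.
    subst; rewrite !Hu //; exact: yr.
by rewrite ex ey; case: (grad_biquad a (x, y)).
Qed.
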